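(* Let $k\ge 1$, $c\ge 1$, $t\ge 1$ be integers. Assume that every $k$-tree admits a $c$-clique-colorable $t$-track layout. Then every $(k+1)$-tree admits a track layout on $t\cdot(2c+1)$ tracks, i.e. has track number at most $t(2c+1)$.
   Context: All graphs are finite, simple and undirected. A $k$-tree is defined recursively: the complete graph $K_k$ is a $k$-tree, and adding to a $k$-tree a new vertex adjacent to all vertices of some $k$-clique yields a $k$-tree. A $t$-track assignment of a graph $G$ is a partition of $V(G)$ into $t$ sets $V_1,\dots,V_t$ (tracks), each an independent set of $G$, together with a total order $<_i$ on each $V_i$. An X-crossing consists of two edges $(u,v)$ and $(x,y)$ with $u,x\in V_i$, $v,y\in V_j$ ($i\neq j$), $u<_i x$ and $y<_j v$. A $t$-track layout is a $t$-track assignment with no X-crossing; the track number $\mathrm{tn}(G)$ is the minimum $t$ for which $G$ has a $t$-track layout. Given a track layout of $G$, a clique $C_1$ precedes a clique $C_2$, written $C_1\prec C_2$, if for every track $V_i$ and all $u\in V_i\cap C_1$, $w\in V_i\cap C_2$ we have $u\le_i w$. A set $S$ of cliques is nicely ordered if its elements can be listed as $C_1,\dots,C_{|S|}$ with $C_i\prec C_j$ for all $i<j$. A track layout of $G$ is $c$-clique-colorable if the set of all maximal cliques of $G$ can be partitioned into $c$ nicely ordered subsets. *)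

(* Defs.v *)
From mathcomp Require Import all_boot.
Set Implicit Arguments. Unset Strict Implicit. Unset Printing Implicit Defensive.

(* Labelled k-trees on vertex set {0,...,n-1}, built by the recursive definition:
   K_k on {0..k-1}; then vertex n is added adjacent exactly to a k-clique C of
   the current graph. *)
Definition complete_rel (k : nat) : rel nat :=
  fun x y => [&& x < k, y < k & x != y].

Definition is_kclique_nat (k n : nat) (E : rel nat) (C : seq nat) : Prop :=
  [/\ uniq C, size C = k, all (fun x => x < n) C &
      forall x y, x \in C -> y \in C -> x != y -> E x y].

Definition add_vertex (n : nat) (E : rel nat) (C : seq nat) : rel nat :=
  fun x y => [|| E x y, (x == n) && (y \in C) | (y == n) && (x \in C)].

Inductive ktree (k : nat) : nat -> rel nat -> Prop :=
  | ktree_base : ktree k k (complete_rel k)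
  | ktree_step n E C : ktree k n E -> is_kclique_nat k n E C ->
      ktree k n.+1 (add_vertex n E C).

Definition is_ktree (k : nat) (T : finType) (e : rel T) : Prop :=
  exists n (E : rel nat), ktree k n E /\
    exists f : T -> 'I_n, bijective f /\ forall x y, e x y = E (f x) (f y).

(* tr x = track of x (among t tracks); the total order on each track is given
   by the positions pos, injective on each track. *)
Definition track_layout (T : finType) (e : rel T) (t : nat)
    (tr : T -> 'I_t) (pos : T -> nat) : Prop :=
  [/\
      forall x y, e x y -> tr x != tr y,
      forall x y, tr x = tr y -> pos x = pos y -> x = y &
      forall u v x y, e u v -> e x y -> tr u = tr x -> tr v = tr y ->
        tr u != tr v -> pos u < pos x -> pos y < pos v -> False].

Definition has_track_layout (T : finType) (e : rel T) (t : nat) : Prop :=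
  exists (tr : T -> 'I_t) (pos : T -> nat), track_layout e tr pos.

Definition is_clique (T : finType) (e : rel T) (A : {set T}) : Prop :=
  forall x y, x \in A -> y \in A -> x != y -> e x y.

Definition is_max_clique (T : finType) (e : rel T) (A : {set T}) : Prop :=
  is_clique e A /\ forall B : {set T}, is_clique e B -> A \subset B -> B = A.

Definition precedes (T : finType) (t : nat) (tr : T -> 'I_t) (pos : T -> nat)
    (C1 C2 : {set T}) : Prop :=
  forall u w, u \in C1 -> w \in C2 -> tr u = tr w -> pos u <= pos w.

Definition nicely_ordered (T : finType) (t : nat) (tr : T -> 'I_t)
    (pos : T -> nat) (S : {set {set T}}) : Prop :=
  exists s : seq {set T}, [/\ uniq s, forall C, (C \in s) = (C \in S) &
    forall i j, i < j < size s -> precedes tr pos (nth set0 s i) (nth set0 s j)].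

(* The set of maximal cliques is partitioned into c nicely ordered classes
   (classes are allowed to be empty). *)
Definition clique_colorable (T : finType) (e : rel T) (t : nat)
    (tr : T -> 'I_t) (pos : T -> nat) (c : nat) : Prop :=
  exists col : {set T} -> 'I_c,
    forall i : 'I_c,
      forall S : {set {set T}},
        (forall C, C \in S <-> (is_max_clique e C /\ col C = i)) ->
        nicely_ordered tr pos S.

(* Main.v *)
Require Import Defs.
From mathcomp Require Import all_boot.
From mathcomp Require Import zify.
From Stdlib Require Import ClassicalEpsilon.
Set Implicit Arguments. Unset Strict Implicit. Unset Printing Implicit Defensive.

Lemma ktree_bound k n E : ktree k n E -> forall x y, E x y -> x < n /\ y < n.
Proof.
elim=> [|m E' C kt IH [uC sC aC cC]] x y.
  by rewrite /complete_rel => /and3P[].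
rewrite /add_vertex => /orP[/IH|/orP[]/andP[/eqP-> hy]]; first lia.
  by move/allP: aC => /(_ _ hy); lia.
by move/allP: aC => /(_ _ hy); lia.
Qed.

Lemma ktree_sym k n E : ktree k n E -> forall x y, E x y = E y x.
Proof.
elim=> [|m E' C kt IH _] x y.
  by rewrite /complete_rel [y == x]eq_sym; case: (x < k); case: (y < k).
by rewrite /add_vertex IH; case: (E' y x); case: (x == m); case: (y == m);
  case: (x \in C); case: (y \in C).
Qed.

Lemma add_vertex_mono n (E : rel nat) (C : seq nat) x y : E x y -> add_vertex n E C x y.
Proof. by rewrite /add_vertex => ->. Qed.

Lemma ktree_ext k n E : ktree k n E -> forall Q : seq nat, uniq Q -> size Q <= k ->
  all (fun x => x < n) Q -> (forall x y, x \in Q -> y \in Q -> x != y -> E x y) ->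
  exists D, is_kclique_nat k n E D /\ {subset Q <= D}.
Proof.
elim=> [|m E' D0 kt IH [uD sD aD cD]] Q uQ sQ aQ cQ.
  exists (iota 0 k); split; last by move=> x /(allP aQ) hx; rewrite mem_iota.
  split; [exact: iota_uniq|exact: size_iota|apply/allP=> x; rewrite mem_iota; lia|].
  move=> x y; rewrite !mem_iota /complete_rel => hx hy ->; lia.
have bnd := ktree_bound kt.
case mQ: (m \in Q); last first.
  have aQ' : all (fun x => x < m) Q.
    apply/allP=> x hx; move: (allP aQ x hx); rewrite ltnS leq_eqVlt => /orP[/eqP xm|//].
    by rewrite -xm hx in mQ.
  have [|D [[uD' sD' aD' cD'] sub]] := IH Q uQ sQ aQ'.
    move=> x y hx hy hxy; have := cQ x y hx hy hxy.
    have := allP aQ' x hx; have := allP aQ' y hy.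
    by rewrite /add_vertex => ? ? /orP[//|/orP[]/andP[/eqP ?]]; lia.
  exists D; split=> //; split=> //.
    by apply/allP=> x /(allP aD'); lia.
  by move=> x y hx hy hxy; apply: add_vertex_mono; apply: cD'.
have QD : {subset rem m Q <= D0}.
  move=> y; rewrite (mem_rem_uniq _ uQ) => /andP[/= ym yQ].
  have := cQ m y mQ yQ; rewrite eq_sym ym => /(_ isT).
  rewrite /add_vertex eqxx /= => /orP[/bnd|/orP[//|/andP[/eqP yy _]]]; first lia.
  by move: ym; rewrite yy eqxx.
have : ~~ all (fun z => z \in Q) D0.
  apply/negP=> /allP hall.
  have : size D0 <= size (rem m Q).
    apply: uniq_leq_size => // z hz; rewrite (mem_rem_uniq _ uQ) inE hall // andbT.
    by apply/eqP=> zm; have := allP aD z hz; lia.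
  have : 0 < size Q by case: (Q) mQ.
  rewrite size_rem // sD; case: (size Q) sQ => //= q; lia.
case/allPn=> z zD zQ.
exists (m :: rem z D0); split.
  split.
  - rewrite /= rem_uniq // andbT; apply/negP=> /mem_rem /(allP aD); lia.
  - by rewrite /= size_rem // -sD; case: (D0) zD.
  - rewrite /= ltnSn /=; apply/allP=> x /mem_rem /(allP aD); lia.
  - move=> x y; rewrite !inE => /orP[/eqP->|hx] /orP[/eqP->|hy]; rewrite ?eqxx //.
    + by move=> _; rewrite /add_vertex eqxx (mem_rem hy) orbT.
    + by move=> _; rewrite /add_vertex eqxx (mem_rem hx) !orbT.
    + by move=> hxy; apply: add_vertex_mono; apply: cD (mem_rem hx) (mem_rem hy) hxy.
move=> x hx; rewrite inE; case: eqP => //= xm.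
rewrite (mem_rem_uniq _ uD) /=; apply/andP; split.
  by apply/eqP=> xz; rewrite -xz hx in zQ.
by apply: QD; rewrite (mem_rem_uniq _ uQ) /=; apply/andP; split=> //; apply/eqP.
Qed.

Record Inv (k n : nat) (E : rel nat) (lay cmp par : nat -> nat) (shd : nat -> seq nat)
  (EH : rel nat) : Prop := {
  iv_kt : ktree k n EH;
  iv_L : forall x y, E x y -> [\/ lay x = lay y, lay y = (lay x).+1 | lay x = (lay y).+1];
  iv_H : forall x y, E x y -> lay x = lay y -> EH x y /\ cmp x = cmp y;
  iv_S1 : forall x y, E x y -> lay y = (lay x).+1 -> x \in shd (cmp y);
  iv_S2 : forall y z, y < n -> z \in shd (cmp y) ->
     [/\ z < n, cmp z = par (cmp y) & (lay z).+1 = lay y];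
  iv_S3 : forall y z1 z2, y < n -> z1 \in shd (cmp y) -> z2 \in shd (cmp y) ->
     z1 != z2 -> E z1 z2;
  iv_Z : forall x, x < n -> (lay x = 0 -> cmp x = 0) /\ cmp x <= x }.

Lemma add_vertexP n (E : rel nat) (C : seq nat) x y : add_vertex n E C x y ->
  [\/ E x y, x = n /\ y \in C | y = n /\ x \in C].
Proof.
rewrite /add_vertex => /orP[h|/orP[]/andP[/eqP h1 h2]]; by [constructor 1|constructor 2|constructor 3].
Qed.

Lemma exists_min (s : seq nat) (f : nat -> nat) : s != [::] ->
  exists2 x0, x0 \in s & forall x, x \in s -> f x0 <= f x.
Proof.
elim: s => // a [|b s] IH _.
  by exists a; rewrite ?inE // => x; rewrite inE => /eqP->.
have [x0 hx0 hmin] := IH isT.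
case: (leqP (f a) (f x0)) => h.
  exists a; first by rewrite inE eqxx.
  move=> x; rewrite inE => /orP[/eqP->//|/hmin]; lia.
exists x0; first by rewrite inE hx0 orbT.
move=> x; rewrite inE => /orP[/eqP->|/hmin//]; lia.
Qed.

Lemma layering_base k : exists lay cmp par shd EH,
  Inv k k.+1 (complete_rel k.+1) lay cmp par shd EH.
Proof.
exists (fun x => if x == 0 then 0 else 1), (fun x => if x == 0 then 0 else 1),
  (fun _ => 0), (fun X => if X == 1 then [:: 0] else [::]),
  (add_vertex k (complete_rel k) (iota 0 k)).
split.
- apply: ktree_step; first exact: ktree_base.
  split; [exact: iota_uniq|exact: size_iota|apply/allP=> x; rewrite mem_iota; lia|].
  move=> x y; rewrite !mem_iota /complete_rel => hx hy ->; lia.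
- move=> x y _; case: (x == 0); case: (y == 0); by [constructor 1|constructor 2|constructor 3].
- move=> x y; rewrite /complete_rel /add_vertex !mem_iota => /and3P[hx hy hxy].
  have [x0|x0] := eqVneq x 0; have [y0|y0] := eqVneq y 0 => //=.
  - by move: hxy; rewrite x0 y0.
  - split => //; lia.
- move=> x y _; have [x0|x0] := eqVneq x 0; have [y0|y0] := eqVneq y 0 => //= _.
  by rewrite x0 inE.
- move=> y z hy; have [y0|y0] := eqVneq y 0 => //=; rewrite inE => /eqP ->; split => //.
- move=> y z1 z2 hy; have [y0|y0] := eqVneq y 0 => //=; rewrite !inE => /eqP-> /eqP->; by rewrite eqxx.
- move=> x hx; have [x0|x0] := eqVneq x 0 => //; split => //; lia.
Qed.

Lemma eq_sym_neq (x y : nat) : x != y -> y != x.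
Proof. by rewrite eq_sym. Qed.

Lemma layering_step k n E C lay cmp par shd EH :
  ktree k.+1 n E -> is_kclique_nat k.+1 n E C -> Inv k n E lay cmp par shd EH ->
  exists lay' cmp' par' shd' EH', Inv k n.+1 (add_vertex n E C) lay' cmp' par' shd' EH'.
Proof.
move=> kt [uC sC aC cC] [kH L Hh S1 S2 S3 Z].
have bnd := ktree_bound kt.
have Cne : C != [::] by case: (C) sC.
have [x0 x0C x0min] := exists_min lay Cne.
set m := lay x0.
have Cn x : x \in C -> x < n by move=> xC; apply: (allP aC).
have layC x : x \in C -> lay x = m \/ lay x = m.+1.
  move=> xC; have [->|xx0] := eqVneq x x0; first by left.
  have := x0min x xC; rewrite -/m.
  case: (L x0 x (cC x0 x x0C xC (eq_sym_neq xx0))); lia.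
set Ch := [seq x <- C | lay x != m].
have ChP x : (x \in Ch) = (x \in C) && (lay x != m) by rewrite mem_filter andbC.
have sCh : size Ch <= k.
  have h1 := count_predC (fun x => lay x != m) C.
  have : has (predC (fun x => lay x != m)) C by apply/hasP; exists x0; rewrite //= negbK.
  rewrite has_count size_filter; lia.
have [D [kD subD]] : exists D, is_kclique_nat k n EH D /\ {subset Ch <= D}.
  apply: (ktree_ext kH (filter_uniq _ uC) sCh).
    by apply/allP=> x; rewrite ChP => /andP[/Cn].
  move=> x y; rewrite !ChP => /andP[xC xm] /andP[yC ym] xy.
  have e := cC x y xC yC xy; apply: (proj1 (Hh x y e _)).
  by case: (layC x xC) xm => [->|->]; case: (layC y yC) ym => [->|->]; rewrite ?eqxx.
have nE x y : E x y -> (x == n) = false /\ (y == n) = false.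
  by move=> /bnd [hx hy]; rewrite !ltn_eqF.
have EE x y : E x y -> add_vertex n E C x y by apply: add_vertex_mono.
exists (fun x => if x == n then m.+1 else lay x).
case hCh: Ch => [|w Ch'].
- (* new component *)
  have allm x : x \in C -> lay x = m.
    move=> xC; case: (layC x xC) => // h.
    have : x \in Ch by rewrite ChP xC h; lia.
    by rewrite hCh.
  have cmpC x : x \in C -> cmp x = cmp x0.
    move=> xC; have [->//|xx0] := eqVneq x x0.
    by apply: (proj2 (Hh x x0 (cC x x0 xC x0C xx0) _)); rewrite allm.
  have cmpn x : x < n -> (cmp x == n) = false.
    by move=> hx; have [_ h] := Z x hx; rewrite ltn_eqF //; lia.
  exists (fun x => if x == n then n else cmp x),
    (fun X => if X == n then cmp x0 else par X),
    (fun X => if X == n then C else shd X), (add_vertex n EH D).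
  split.
  + exact: ktree_step kH kD.
  + move=> x y /add_vertexP[e|[-> yC]|[-> xC]].
    * by have [-> ->] := nE x y e; apply: L.
    * by rewrite eqxx (ltn_eqF (Cn y yC)) allm //; constructor 3.
    * by rewrite eqxx (ltn_eqF (Cn x xC)) allm //; constructor 2.
  + move=> x y /add_vertexP[e|[-> yC]|[-> xC]].
    * have [-> ->] := nE x y e => /(Hh x y e) [h1 h2]; split => //; exact: add_vertex_mono.
    * by rewrite eqxx (ltn_eqF (Cn y yC)) allm //; lia.
    * by rewrite eqxx (ltn_eqF (Cn x xC)) allm //; lia.
  + move=> x y /add_vertexP[e|[-> yC]|[-> xC]].
    * have [-> ->] := nE x y e => /(S1 x y e).
      by have [_ hy] := bnd x y e; rewrite cmpn.
    * by rewrite eqxx (ltn_eqF (Cn y yC)) allm //; lia.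
    * by rewrite !eqxx.
  + move=> y z; rewrite ltnS leq_eqVlt => /orP[/eqP->|hy].
    * rewrite !eqxx => zC; rewrite (ltn_eqF (Cn z zC)) cmpC // allm //.
      by split => //; apply: ltnW; apply: Cn.
    * rewrite (ltn_eqF hy) cmpn // => /(S2 y z hy) [hz h1 h2].
      by rewrite (ltn_eqF hz); split => //; apply: ltnW.
  + move=> y z1 z2; rewrite ltnS leq_eqVlt => /orP[/eqP->|hy].
    * rewrite !eqxx => h1 h2 h3; apply: EE; exact: cC.
    * rewrite (ltn_eqF hy) cmpn // => h1 h2 h3; apply: EE; exact: (S3 y).
  + move=> x; rewrite ltnS leq_eqVlt => /orP[/eqP->|hx]; first by rewrite eqxx.
    by rewrite (ltn_eqF hx); apply: Z.
- (* joins component of w *)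
  have wCh : w \in Ch by rewrite hCh inE eqxx.
  move: (wCh); rewrite ChP => /andP[wC wm].
  have lw : lay w = m.+1 by case: (layC w wC) wm => ->; rewrite ?eqxx.
  exists (fun x => if x == n then cmp w else cmp x), par, shd, (add_vertex n EH D).
  split.
  + exact: ktree_step kH kD.
  + move=> x y /add_vertexP[e|[-> yC]|[-> xC]].
    * by have [-> ->] := nE x y e; apply: L.
    * rewrite eqxx (ltn_eqF (Cn y yC)); case: (layC y yC) => ->; by [constructor 1|constructor 3].
    * rewrite eqxx (ltn_eqF (Cn x xC)); case: (layC x xC) => ->; by [constructor 1|constructor 2].
  + move=> x y /add_vertexP[e|[-> yC]|[-> xC]].
    * have [-> ->] := nE x y e => /(Hh x y e) [h1 h2]; split => //; exact: add_vertex_mono.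
    * rewrite eqxx (ltn_eqF (Cn y yC)) => hl.
      have yCh : y \in Ch by rewrite ChP yC -hl; lia.
      split; first by rewrite /add_vertex eqxx (subD _ yCh) orbT.
      have [->//|yw] := eqVneq y w.
      by apply: esym; apply: (proj2 (Hh y w (cC y w yC wC yw) _)); rewrite -hl.
    * rewrite eqxx (ltn_eqF (Cn x xC)) => hl.
      have xCh : x \in Ch by rewrite ChP xC hl; lia.
      split; first by rewrite /add_vertex eqxx (subD _ xCh) !orbT.
      have [->//|xw] := eqVneq x w.
      by apply: (proj2 (Hh x w (cC x w xC wC xw) _)); rewrite hl.
  + move=> x y /add_vertexP[e|[-> yC]|[-> xC]].
    * by have [-> ->] := nE x y e => /(S1 x y e).
    * by rewrite eqxx (ltn_eqF (Cn y yC)); case: (layC y yC) => ->; lia.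
    * rewrite !eqxx (ltn_eqF (Cn x xC)) => hl.
      have xw : x != w by apply/eqP=> xw; move: hl; rewrite xw lw; lia.
      by apply: (S1 x w (cC x w xC wC xw)); rewrite lw.
  + move=> y z; rewrite ltnS leq_eqVlt => /orP[/eqP->|hy].
    * rewrite !eqxx => /(S2 w z (Cn w wC)) [hz h1 h2].
      by rewrite (ltn_eqF hz) h1 h2 lw; split => //; apply: ltnW.
    * rewrite (ltn_eqF hy) => /(S2 y z hy) [hz h1 h2].
      by rewrite (ltn_eqF hz); split => //; apply: ltnW.
  + move=> y z1 z2; rewrite ltnS leq_eqVlt => /orP[/eqP->|hy].
    * rewrite !eqxx => h1 h2 h3; apply: EE; exact: (S3 w _ _ (Cn w wC)).
    * rewrite (ltn_eqF hy) => h1 h2 h3; apply: EE; exact: (S3 y).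
  + move=> x; rewrite ltnS leq_eqVlt => /orP[/eqP->|hx].
      by rewrite eqxx; split => //; have [_ h] := Z w (Cn w wC); have := Cn w wC; lia.
    by rewrite (ltn_eqF hx); apply: Z.
Qed.

Lemma layering k n E : ktree k.+1 n E ->
  exists lay cmp par shd EH, Inv k n E lay cmp par shd EH.
Proof.
elim=> [|m E' C kt IH cl]; first exact: layering_base.
have [lay [cmp [par [shd [EH iv]]]]] := IH.
exact: layering_step kt cl iv.
Qed.

Definition cliqueb (T : finType) (e : rel T) (A : {set T}) :=
  [forall x in A, forall y in A, (x != y) ==> e x y].

Lemma cliquebP (T : finType) (e : rel T) (A : {set T}) :
  reflect (is_clique e A) (cliqueb e A).
Proof.
apply: (iffP forall_inP) => [h x y xA yA xy|h x xA].
  by have /forall_inP/(_ y yA)/implyP := h x xA; apply.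
by apply/forall_inP=> y yA; apply/implyP; apply: h.
Qed.

Lemma max_clique_ext (T : finType) (e : rel T) (A : {set T}) :
  is_clique e A -> exists B, is_max_clique e B /\ A \subset B.
Proof.
move=> cA.
pose P := [pred B : {set T} | cliqueb e B && (A \subset B)].
have PA : P A by rewrite inE subxx andbT; apply/cliquebP.
case: (@arg_maxnP _ A P (fun B : {set T} => #|B|) PA) => B /andP[/cliquebP cB AB] hmax.
exists B; split => //; split => // B' cB' BB'.
apply/eqP; rewrite eq_sym eqEcard BB' /=.
apply: hmax; rewrite inE (subset_trans AB BB') andbT; exact/cliquebP.
Qed.

Lemma lex_lt a b a' b' B : b < B -> b' < B -> a * B + b < a' * B + b' ->
  a < a' \/ (a = a' /\ b < b').
Proof.
move=> hb hb' h; case: (ltngtP a a') => [l|l|e]; [by left| |by right; split=> //; subst; lia].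
exfalso; have : a'.+1 * B <= a * B by rewrite leq_mul2r l orbT.
rewrite mulSn; lia.
Qed.

Lemma lex_lt_intro a b a' b' B : b < B -> b' < B ->
  a < a' \/ (a = a' /\ b < b') -> a * B + b < a' * B + b'.
Proof.
move=> hb hb' [l|[-> l]]; last lia.
have : a.+1 * B <= a' * B by rewrite leq_mul2r l orbT.
rewrite mulSn; lia.
Qed.

Lemma lex_eq a b a' b' B : b < B -> b' < B -> a * B + b = a' * B + b' -> a = a' /\ b = b'.
Proof.
move=> hb hb' h; case: (ltngtP a a') => l.
- by have := lex_lt_intro hb hb' (or_introl l); lia.
- by have := lex_lt_intro hb' hb (or_introl l); lia.
- subst; split=> //; lia.
Qed.

Lemma lex_le a b a' b' B : b < B -> b' < B -> a * B + b <= a' * B + b' ->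
  a < a' \/ (a = a' /\ b <= b').
Proof.
move=> hb hb'; rewrite leq_eqVlt => /orP[/eqP h|h].
  by have [-> ->] := lex_eq hb hb' h; right.
by case: (lex_lt hb hb' h) => [|[]]; [left|right; split=> //; lia].
Qed.

Lemma enc_bound a b A B : a < A -> b < B -> a * B + b < A * B.
Proof.
move=> ha hb; have : a.+1 * B <= A * B by rewrite leq_mul2r ha orbT.
rewrite mulSn; lia.
Qed.

Lemma mod_far x y m : 0 < m -> x <= y -> x %% m = y %% m -> x < y -> x + m <= y.
Proof.
move=> m0 xy hm lt.
have : m %| y - x by rewrite -eqn_mod_dvd // hm.
move/dvdn_leq; rewrite subn_gt0 => /(_ lt); lia.
Qed.

Section Assembly.
Variables (k c t n : nat) (E : rel nat) (lay cmp par : nat -> nat) (shd : nat -> seq nat)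
  (EH : rel nat).
Hypothesis c_pos : 0 < c.
Hypothesis kt : ktree k.+1 n E.
Hypothesis iv : Inv k n E lay cmp par shd EH.
Definition eH : rel 'I_n := fun x y => EH x y.
Definition eG : rel 'I_n := fun x y => E x y.
Variables (tr : 'I_n -> 'I_t) (posH : 'I_n -> nat) (col : {set 'I_n} -> 'I_c).
Hypothesis lay_ok : track_layout eH tr posH.
Variable sq : 'I_c -> seq {set 'I_n}.
Hypothesis sq_mem : forall g C, C \in sq g <-> is_max_clique eH C /\ col C = g.
Hypothesis sq_prec : forall g i j, i < j < size (sq g) ->
  precedes tr posH (nth set0 (sq g) i) (nth set0 (sq g) j).
Variable M : nat -> {set 'I_n}.
Hypothesis M_max : forall X, is_max_clique eH (M X).
Hypothesis M_sub : forall (a b : 'I_n), val a \in shd (cmp b) -> a \in M (cmp b).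

Definition gam X := col (M X).
Definition del X : nat := (gam X).+1.
Definition idx X := index (M X) (sq (gam X)).
Definition Bs := \max_(g : 'I_c) size (sq g).
Definition B := Bs * n.
Definition sub X := idx X * n + X.
Fixpoint iC l X := if l is l'.+1 then iC l' (par X) + del X else 0.
Fixpoint kC l X := if l is l'.+1 then kC l' (par X) * B + sub X else 0.
Definition ival (v : nat) := iC (lay v) (cmp v).
Definition key (v : nat) := kC (lay v) (cmp v).
Definition Lb := (\max_(v : 'I_n) lay v).+1.
Definition Kb := (\max_(v : 'I_n) key v).+1.
Definition Pb := (\max_(v : 'I_n) posH v).+1.
Definition LK (v : 'I_n) := lay v * Kb + key v.
Definition LKb := Lb * Kb.
Definition kap (v : 'I_n) := (ival v * LKb + LK v) * Pb + posH v.
Lemma M2pos : 0 < 2 * c + 1. Proof. by rewrite addn1. Qed.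
Definition tau (v : 'I_n) : 'I_(t * (2 * c + 1)) :=
  Ordinal (enc_bound (ltn_ord (tr v)) (ltn_pmod (ival v) M2pos)).

Lemma M_in X : M X \in sq (gam X).
Proof. by apply/sq_mem. Qed.

Lemma idx_lt X : idx X < Bs.
Proof.
have h : idx X < size (sq (gam X)) by rewrite index_mem M_in.
by apply: (leq_trans h); apply: (leq_bigmax (gam X)).
Qed.

Lemma cmp_lt (v : 'I_n) : cmp v < n.
Proof. have [_ h] := iv_Z iv (ltn_ord v); have := ltn_ord v; lia. Qed.

Lemma sub_lt (v : 'I_n) : sub (cmp v) < B.
Proof. exact: enc_bound (idx_lt _) (cmp_lt v). Qed.

Lemma del_bd X : 0 < del X <= c.
Proof. by rewrite /del ltnS ltn_ord. Qed.

Definition child (p q : 'I_n) := [/\ lay q = (lay p).+1, p \in M (cmp q) & cmp p = par (cmp q)].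

Lemma edge_cases (a b : 'I_n) : eG a b ->
  [\/ [/\ lay a = lay b, cmp a = cmp b & eH a b], child a b | child b a].
Proof.
rewrite /eG => e.
have ch (x y : 'I_n) : E x y -> lay y = (lay x).+1 -> child x y.
  move=> exy h; have s1 := iv_S1 iv exy h.
  have [_ h2 _] := iv_S2 iv (ltn_ord y) s1.
  by split => //; apply: M_sub.
case: (iv_L iv e) => h.
- by have [h1 h2] := iv_H iv e h; constructor 1.
- by constructor 2; apply: ch.
- by constructor 3; apply: ch => //; rewrite (ktree_sym kt).
Qed.

Lemma child_ival p q : child p q -> ival q = ival p + del (cmp q).
Proof. by case=> hl _ hc; rewrite /ival hl /= hc. Qed.

Lemma child_key p q : child p q -> key q = key p * B + sub (cmp q).
Proof. by case=> hl _ hc; rewrite /key hl /= hc. Qed.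

Lemma key_inj (a b : 'I_n) : lay a = lay b -> key a = key b -> cmp a = cmp b.
Proof.
rewrite /key => hl; rewrite -hl; case hla: (lay a) => [|l].
  by have [h1 _] := iv_Z iv (ltn_ord a); have [h2 _] := iv_Z iv (ltn_ord b); rewrite h1 // h2 // -hl.
move=> /= /(lex_eq (sub_lt a) (sub_lt b)) [_].
by move/(lex_eq (cmp_lt a) (cmp_lt b)) => [].
Qed.

Lemma lay_lt (v : 'I_n) : lay v < Lb.
Proof. by rewrite ltnS; apply: (leq_bigmax v). Qed.
Lemma key_lt (v : 'I_n) : key v < Kb.
Proof. by rewrite ltnS; apply: (leq_bigmax v). Qed.
Lemma pos_lt (v : 'I_n) : posH v < Pb.
Proof. by rewrite ltnS; apply: (leq_bigmax v). Qed.
Lemma LK_lt (v : 'I_n) : LK v < LKb.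
Proof. exact: enc_bound (lay_lt v) (key_lt v). Qed.

Lemma span (a b : 'I_n) : eG a b -> ival a <= ival b + c /\ ival b <= ival a + c.
Proof.
case/edge_cases=> [[h1 h2 _]|h|h].
- by rewrite /ival h1 h2; lia.
- by rewrite (child_ival h); have := del_bd (cmp b); lia.
- by rewrite (child_ival h); have := del_bd (cmp a); lia.
Qed.

Lemma tau_eq a b : tau a = tau b -> tr a = tr b /\ ival a %% (2 * c + 1) = ival b %% (2 * c + 1).
Proof.
move/(congr1 val) => /=.
move/(lex_eq (ltn_pmod _ M2pos) (ltn_pmod _ M2pos)) => [h1 h2]; split => //.
exact: ord_inj.
Qed.

Lemma kap_lt a b : kap a < kap b ->
  ival a < ival b \/ (ival a = ival b /\ (LK a < LK b \/ (LK a = LK b /\ posH a < posH b))).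
Proof.
rewrite /kap => /(lex_lt (pos_lt a) (pos_lt b)) [h|[h1 h2]].
- case: (lex_le (LK_lt a) (LK_lt b) (ltnW h)) => [|[e h3]]; first by left.
  right; split => //; left.
  by case: (lex_lt (LK_lt a) (LK_lt b) h) => [|[]]; lia.
- have [e1 e2] := lex_eq (LK_lt a) (LK_lt b) h1.
  by right; split => //; right.
Qed.

Lemma child_LK p1 p2 c1 c2 : child p1 c1 -> child p2 c2 -> LK p1 < LK p2 -> LK c1 < LK c2.
Proof.
move=> h1 h2 /(lex_lt (key_lt p1) (key_lt p2)) h.
rewrite /LK; apply: lex_lt_intro; try exact: key_lt.
case: (h1) (h2) => l1 _ _ [l2 _ _]; rewrite l1 l2.
case: h => [|[e lt]]; first by left.
right; split; first by rewrite e.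
rewrite (child_key h1) (child_key h2); apply: lex_lt_intro; try exact: sub_lt.
by left.
Qed.

Lemma PC p1 p2 c1 c2 : child p1 c1 -> child p2 c2 -> tr p1 = tr p2 ->
  ival p1 = ival p2 -> ival c1 = ival c2 -> kap p1 < kap p2 -> kap c2 < kap c1 -> False.
Proof.
move=> h1 h2 etr ep ec hp hc.
have d12 : del (cmp c1) = del (cmp c2).
  by move: ec; rewrite (child_ival h1) (child_ival h2) ep; lia.
have g12 : gam (cmp c1) = gam (cmp c2) by apply: ord_inj; move: d12; rewrite /del; lia.
have hLKc : LK c2 <= LK c1.
  by case/kap_lt: hc => [|[_ [|[]]]]; lia.
case/kap_lt: hp => [|[_ [hLK|[hLK hpos]]]]; first lia.
  by have := child_LK h1 h2 hLK; lia.
have [el ek] := lex_eq (key_lt p1) (key_lt p2) hLK.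
have ecmp := key_inj el ek.
have hl : lay c1 = lay c2 by case: (h1) (h2) => -> _ _ [-> _ _]; rewrite el.
have hk : key c2 <= key c1.
  by move: hLKc; rewrite /LK hl => /(lex_le (key_lt c2) (key_lt c1)) [|[]]; lia.
have hs : sub (cmp c2) <= sub (cmp c1).
  by move: hk; rewrite (child_key h1) (child_key h2) ek; lia.
move: hs; rewrite /sub => /(lex_le (cmp_lt c2) (cmp_lt c1)) hs.
have m1 := M_in (cmp c1); have m2 := M_in (cmp c2).
have n1 : nth set0 (sq (gam (cmp c1))) (idx (cmp c1)) = M (cmp c1) by rewrite nth_index.
have n2 : nth set0 (sq (gam (cmp c1))) (idx (cmp c2)) = M (cmp c2).
  by rewrite /idx g12 nth_index.
case: h1 => _ pm1 _; case: h2 => _ pm2 _.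
case: hs => [lt|[eidx _]].
- have := sq_prec (g := gam (cmp c1)) (i := idx (cmp c2)) (j := idx (cmp c1)).
  rewrite lt /= index_mem m1 => /(_ isT); rewrite n1 n2 => /(_ p2 p1 pm2 pm1 (esym etr)).
  lia.
- have eM : M (cmp c1) = M (cmp c2) by rewrite -n1 -n2 eidx.
  have [[cl _] _] := (M_max (cmp c1), 0).
  have p12 : p1 != p2 by apply/eqP=> e; move: hpos; rewrite e ltnn.
  have pm2' : p2 \in M (cmp c1) by rewrite eM.
  have := cl p1 p2 pm1 pm2' p12.
  by case: lay_ok => /(_ p1 p2) hne _ _ /hne; rewrite etr eqxx.
Qed.

Lemma no_cross u v x y : eG u v -> eG x y -> tau u = tau x -> tau v = tau y ->
  kap u < kap x -> kap y < kap v -> False.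
Proof.
move=> euv exy /tau_eq [tux mux] /tau_eq [tvy mvy] hux hyv.
have iux : ival u <= ival x by case/kap_lt: hux => [|[]]; lia.
have iyv : ival y <= ival v by case/kap_lt: hyv => [|[]]; lia.
have [s1 s2] := span euv; have [s3 s4] := span exy.
have M0 := M2pos.
have e1 : ival u = ival x.
  apply/eqP; rewrite eqn_leq iux /=; rewrite leqNgt; apply/negP => lt.
  have := mod_far M0 iux mux lt; lia.
have e2 : ival y = ival v.
  apply/eqP; rewrite eqn_leq iyv /=; rewrite leqNgt; apply/negP => lt.
  have := mod_far M0 iyv (esym mvy) lt; lia.
have K1 : LK u < LK x \/ LK u = LK x /\ posH u < posH x.
  by case/kap_lt: hux => [|[_ h]]; [lia|].
have K2 : LK y < LK v \/ LK y = LK v /\ posH y < posH v.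
  by case/kap_lt: hyv => [|[_ h]]; [lia|].
case: (edge_cases euv) => [[l1 c1 h1]|ch1|ch1];
case: (edge_cases exy) => [[l2 c2 h2]|ch2|ch2].
- have LKuv : LK u = LK v by rewrite /LK /key l1 c1.
  have LKxy : LK x = LK y by rewrite /LK /key l2 c2.
  have [hp1 hp2] : posH u < posH x /\ posH y < posH v.
    by case: K1 => [|[]]; case: K2 => [|[]]; lia.
  case: lay_ok => hne _ hx; apply: (hx u v x y h1 h2 tux tvy _ hp1 hp2).
  exact: hne.
- have := child_ival ch2; have := del_bd (cmp y); rewrite /ival in e1 e2 *.
  by rewrite /ival l1 c1 in e1 e2 *; lia.
- have := child_ival ch2; have := del_bd (cmp x).
  by rewrite /ival l1 c1 in e1 e2 *; lia.
- have := child_ival ch1; have := del_bd (cmp v).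
  by rewrite /ival l2 c2 in e1 e2 *; lia.
- exact: (PC ch1 ch2 tux e1 (esym e2) hux hyv).
- have := child_ival ch1; have := child_ival ch2; have := del_bd (cmp v);
  have := del_bd (cmp x); lia.
- have := child_ival ch1; have := del_bd (cmp u).
  by rewrite /ival l2 c2 in e1 e2 *; lia.
- have := child_ival ch1; have := child_ival ch2; have := del_bd (cmp u);
  have := del_bd (cmp y); lia.
- exact: (PC ch2 ch1 (esym tvy) e2 (esym e1) hyv hux).
Qed.

Lemma assembled : track_layout eG tau kap.
Proof.
split.
- move=> x y exy; apply/eqP => /tau_eq [etr emod].
  case: (edge_cases exy) => [[_ _ h]|ch|ch].
  + by case: lay_ok => /(_ x y h); rewrite etr eqxx.
  + move: emod; rewrite (child_ival ch) => h.
    have hd := del_bd (cmp y).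
    have lt : ival x < ival x + del (cmp y) by lia.
    have := @mod_far (ival x) (ival x + del (cmp y)) _ M2pos (ltnW lt) h lt; lia.
  + move: emod; rewrite (child_ival ch) => h.
    have hd := del_bd (cmp x).
    have lt : ival y < ival y + del (cmp x) by lia.
    have := @mod_far (ival y) (ival y + del (cmp x)) _ M2pos (ltnW lt) (esym h) lt; lia.
- move=> x y /tau_eq [etr _] ek.
  have [_ ep] := lex_eq (pos_lt x) (pos_lt y) ek.
  by case: lay_ok => _ /(_ x y etr ep).
- move=> u v x y euv exy tux tvy _; exact: no_cross.
Qed.
End Assembly.

Definition pb (P : Prop) : bool := if excluded_middle_informative P then true else false.
Lemma pbE (P : Prop) : pb P <-> P.
Proof. by rewrite /pb; case: excluded_middle_informative. Qed.

Theorem lemma5 (k c t : nat) (hk : 1 <= k) (hc : 1 <= c) (ht : 1 <= t) :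
  (forall (T : finType) (e : rel T), is_ktree k e ->
     exists (tr : T -> 'I_t) (pos : T -> nat),
       track_layout e tr pos /\ clique_colorable e tr pos c) ->
  forall (T : finType) (e : rel T), is_ktree k.+1 e ->
    has_track_layout e (t * (2 * c + 1)).
Proof.
move=> Hyp T e [n [E [kt [f [fbij fe]]]]].
have [lay [cmp [par [shd [EH iv]]]]] := layering kt.
have kH : is_ktree k (@eH n EH).
  exists n, EH; split; first exact: iv_kt iv.
  by exists id; split => //; exists id.
have [tr [posH [lay_ok [col hcol]]]] := Hyp _ _ kH.
pose S (g : 'I_c) := [set C : {set 'I_n} | pb (is_max_clique (@eH n EH) C /\ col C = g)].
have hS g : nicely_ordered tr posH (S g).
  apply: hcol => C; rewrite inE; exact: pbE.
pose sq g := proj1_sig (constructive_indefinite_description _ (hS g)).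
have sqP g : [/\ uniq (sq g), forall C, (C \in sq g) = (C \in S g) &
    forall i j, i < j < size (sq g) -> precedes tr posH (nth set0 (sq g) i) (nth set0 (sq g) j)].
  exact: (proj2_sig (constructive_indefinite_description _ (hS g))).
have sq_mem g C : C \in sq g <-> is_max_clique (@eH n EH) C /\ col C = g.
  by have [_ -> _] := sqP g; rewrite inE; exact: pbE.
have sq_prec g i j : i < j < size (sq g) ->
    precedes tr posH (nth set0 (sq g) i) (nth set0 (sq g) j).
  by move=> hij; have [_ _ h] := sqP g; exact: h hij.
have hM X : exists B, is_max_clique (@eH n EH) B /\
    forall (a b : 'I_n), cmp b = X -> val a \in shd X -> a \in B.
  case: (classic (exists b : 'I_n, cmp b = X)) => [[b hb]|nb].
    have cl : is_clique (@eH n EH) [set a : 'I_n | val a \in shd X].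
      move=> a1 a2; rewrite !inE -hb => h1 h2 h12.
      have [_ _ l1] := iv_S2 iv (ltn_ord b) h1.
      have [_ _ l2] := iv_S2 iv (ltn_ord b) h2.
      have e12 := iv_S3 iv (ltn_ord b) h1 h2 h12.
      have l12 : lay a1 = lay a2 by apply: succn_inj; exact: (etrans l1 (esym l2)).
      by have [] := iv_H iv e12 l12.
    have [B [mB sB]] := max_clique_ext cl.
    exists B; split => // a b' hb' ha.
    by apply: (subsetP sB); rewrite inE.
  have c0 : is_clique (@eH n EH) set0 by move=> x y; rewrite inE.
  have [B [mB _]] := max_clique_ext c0.
  exists B; split => // a b hb; exfalso; apply: nb; by exists b.
pose M X := proj1_sig (constructive_indefinite_description _ (hM X)).
have M_max X : is_max_clique (@eH n EH) (M X).
  exact: (proj1 (proj2_sig (constructive_indefinite_description _ (hM X)))).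
have M_sub (a b : 'I_n) : val a \in shd (cmp b) -> a \in M (cmp b).
  exact: (proj2 (proj2_sig (constructive_indefinite_description _ (hM (cmp b)))) a b erefl).
have := assembled hc kt iv lay_ok sq_mem sq_prec M_max M_sub.
set tau0 := tau _ _ _ _ _ _; set kap0 := kap _ _ _ _ _ _ _ => [[h1 h2 h3]].
exists (fun x => tau0 (f x)), (fun x => kap0 (f x)); split.
- by move=> x y; rewrite fe; apply: h1.
- by move=> x y ht1 hk1; apply: (bij_inj fbij); apply: h2.
- move=> u v x y; rewrite !fe; exact: h3.
Qed.
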